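(* Fix an integer $L\ge 1$ and $\alpha>0$, and let $N_{RF}=1$ or $N_{RF}=L$. For the IT-SU interleaved training scheme with $N_t$ beams, $L$ channel paths, $N_{RF}$ RF chains and threshold $\alpha$ described in the context, the average training length satisfies, as $N_t\to\infty$, $$T_{\text{IT-SU}}=\frac{N_t}{L+1}+\mathcal O(1),$$ where $\mathcal O(1)$ denotes a quantity bounded as $N_t\to\infty$ (with $L,\alpha$ fixed).
   Context: Channel model: for integers $N_t\ge L$, a random subset $\mathcal I\subset\{1,\dots,N_t\}$ with $|\mathcal I|=L$ is drawn uniformly among all $L$-element subsets; conditionally on $\mathcal I$, the coefficients $\bar h_i$, $i\in\mathcal I$, are i.i.d. circularly symmetric complex Gaussian $\mathcal{CN}(0,1/L)$, and $\bar h_i=0$ for $i\notin\mathcal I$. IT-SU scheme (with $N_{RF}\ge1$ RF chains and threshold $\alpha>0$): for $i=1,2,\dots,N_t$ in order, beam $i$ is trained, i.e. $\bar h_i$ becomes known. After step $i$, let $\mathcal B_i=\{l\le i:\bar h_l\neq 0\}$, $L_{B_i}=\min(N_{RF},|\mathcal B_i|)$, and let $\mathcal S_i\subset\mathcal B_i$ be the indices of the $L_{B_i}$ elements of $\mathcal B_i$ with largest $|\bar h_l|$. The training terminates at step $i$ if $\bar h_i\ne 0$ and $\sum_{l\in\mathcal S_i}|\bar h_l|^2>\alpha/N_t$; otherwise it proceeds to step $i+1$. The training length $T$ is the step at which the training terminates, and $T=N_t$ if it never terminates. The average training length is $T_{\text{IT-SU}}=\mathrm E[T]$. *)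

(* Defs.v *)
From HB Require Import structures.
From mathcomp Require Import all_boot all_order all_algebra.
From mathcomp Require Import all_classical all_reals all_analysis.
Set Implicit Arguments. Unset Strict Implicit. Unset Printing Implicit Defensive.
Import Order.TTheory GRing.Theory Num.Theory.
Local Open Scope ring_scope.

Section ITSU.
Variable R : realType.

(* A complex number is represented by its pair (real part, imaginary part). *)
(* Expectation of f(z) for z ~ CN(0, 2 s^2): real and imaginary parts are
   independent N(0, s^2) (s = standard deviation). *)
Definition cgauss_int (s : R) (f : R * R -> \bar R) : \bar R :=
  (\int[normal_prob 0 s]_x \int[normal_prob 0 s]_y f (x, y))%E.

(* Expectation of f(g) where g_0, ..., g_{n-1} are i.i.d. complex Gaussians
   as above (iterated integrals); coordinates >= n are set to 0. *)
Fixpoint iter_cgauss (s : R) (n : nat) (f : (nat -> R * R) -> \bar R)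
  : \bar R :=
  match n with
  | 0 => f (fun _ => (0, 0))
  | n'.+1 => cgauss_int s (fun z =>
      iter_cgauss s n' (fun g => f (fun k => if k == n' then z else g k)))
  end.

(* Beams are indexed 0..Nt-1 internally (beam index j here is beam j+1 of
   the paper). The channel coefficient of beam j is
     hbar_j = g_j if j \in I, and 0 otherwise,
   with g_j i.i.d. CN(0,1/L) independent of the uniform L-subset I. *)
Definition in_support (Nt : nat) (I : {set 'I_Nt}) (j : nat) : bool :=
  j \in [seq nat_of_ord k | k <- enum I].

Definition hnz (Nt : nat) (I : {set 'I_Nt}) (g : nat -> R * R) (j : nat)
  : bool := in_support I j && (g j != (0, 0)).

(* |hbar_j|^2 (only used for j with hbar_j != 0) *)
Definition pw (g : nat -> R * R) (j : nat) : R := (g j).1 ^+ 2 + (g j).2 ^+ 2.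

Definition Bset (Nt : nat) (I : {set 'I_Nt}) (g : nat -> R * R) (j : nat)
  : seq nat := [seq l <- iota 0 j.+1 | hnz I g l].

Definition topsum (NRF Nt : nat) (I : {set 'I_Nt}) (g : nat -> R * R)
  (j : nat) : R :=
  \sum_(x <- take (minn NRF (size (Bset I g j)))
                  (sort (fun a b : R => b <= a) [seq pw g l | l <- Bset I g j]))
     x.

Definition stops (NRF Nt : nat) (alpha : R) (I : {set 'I_Nt})
  (g : nat -> R * R) (j : nat) : bool :=
  hnz I g j && (topsum NRF I g j > alpha / Nt%:R).

(* training length: first (1-based) step at which training terminates,
   Nt if it never does *)
Definition train_len (NRF Nt : nat) (alpha : R) (I : {set 'I_Nt})
  (g : nat -> R * R) : nat :=
  \big[minn/Nt]_(j < Nt | stops NRF alpha I g j) j.+1.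

(* standard deviation of real/imag parts of a CN(0,1/L) variable *)
Definition sdL (L : nat) : R := Num.sqrt ((L%:R *+ 2)^-1).

(* T_IT-SU = E[T]: uniform average over L-subsets I, Gaussian expectation
   over the coefficients. *)
Definition avg_train_len (L NRF Nt : nat) (alpha : R) : \bar R :=
  ((\sum_(I : {set 'I_Nt} | #|I| == L)
      iter_cgauss (sdL L) Nt (fun g => ((train_len NRF alpha I g)%:R)%:E))
   * ((#|[set I : {set 'I_Nt} | #|I| == L]|%:R)^-1)%:E)%E.

End ITSU.

(* Main.v *)
Require Import Defs.
From HB Require Import structures.
From mathcomp Require Import all_boot all_order all_algebra.
From mathcomp Require Import all_classical all_reals all_analysis.
From mathcomp Require Import measurable_realfun.
From mathcomp Require Import ring lra.
Import Order.TTheory GRing.Theory Num.Theory.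
Module CombM.
Set Implicit Arguments. Unset Strict Implicit. Unset Printing Implicit Defensive.

Definition mI (Nt : nat) (I : {set 'I_Nt}) : nat := \big[minn/Nt]_(i in I) (i : nat).

Lemma nbigmin_le_seq (T : eqType) (s : seq T) n (F : T -> nat) x :
  x \in s -> \big[minn/n]_(i <- s) F i <= F x.
Proof.
elim: s => // a s IH; rewrite inE big_cons => /orP [/eqP-> | /IH H].
  exact: geq_minl.
exact: leq_trans (geq_minr _ _) H.
Qed.

Lemma nbigmin_le (T : finType) (P : pred T) n (F : T -> nat) x :
  P x -> \big[minn/n]_(i | P i) F i <= F x.
Proof.
move=> Px; rewrite -big_filter; apply: nbigmin_le_seq.
by rewrite mem_filter Px mem_index_enum.
Qed.

Lemma nbigmin_ge (T : finType) (P : pred T) n (F : T -> nat) k :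
  k <= n -> (forall i, P i -> k <= F i) -> k <= \big[minn/n]_(i | P i) F i.
Proof.
move=> kn H; apply: (big_ind (fun x => k <= x)) => //.
by move=> x y hx hy; rewrite leq_min hx hy.
Qed.

Lemma mI_le Nt (I : {set 'I_Nt}) i : i \in I -> mI I <= i.
Proof. by move=> iI; apply: (nbigmin_le (P := fun i => i \in I)). Qed.

Lemma mI_lt Nt (I : {set 'I_Nt}) : I != finset.set0 -> mI I < Nt.
Proof.
case/set0Pn => i iI; exact: leq_ltn_trans (mI_le iI) (ltn_ord i).
Qed.

Lemma sum_le_ord n m : m < n -> \sum_(j < n) (j <= m : nat) = m.+1.
Proof.
move=> mn; rewrite -(big_mkord xpredT (fun j => (j <= m : nat))).
rewrite (big_cat_nat (n := m.+1)) //=.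
rewrite (@eq_big_nat _ _ _ 0 m.+1 _ (fun _ => 1)); last by move=> i /andP[_ H]; rewrite ltnS in H; rewrite H.
rewrite (@eq_big_nat _ _ _ m.+1 n _ (fun _ => 0)); last by move=> i /andP[H _]; rewrite leqNgt H.
by rewrite !sum_nat_const_nat !muln0 muln1 addn0 subn0.
Qed.

Lemma sum_bool_card (T : finType) (P b : pred T) :
  \sum_(i | P i) (b i : nat) = #|[pred i | P i && b i]|.
Proof.
rewrite -sum1_card big_mkcondr /=; apply: eq_bigr => i _; by case: (b i).
Qed.

Lemma card_ge Nt j : #|[set i : 'I_Nt | j <= i]| = Nt - j.
Proof.
rewrite -sum1_card.
rewrite (eq_bigl (fun i : 'I_Nt => j <= i)); last by move=> i; rewrite inE.
rewrite -(big_mkord (fun i => j <= i) (fun _ => 1)) big_mkcond /=.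
case: (leqP j Nt) => jN.
  rewrite (big_cat_nat (n := j)) //=.
  rewrite (@eq_big_nat _ _ _ 0 j _ (fun _ => 0)); last first.
    by move=> i /andP[_ H]; rewrite leqNgt H.
  rewrite (@eq_big_nat _ _ _ j Nt _ (fun _ => 1)); last first.
    by move=> i /andP[H _]; rewrite H.
  by rewrite !sum_nat_const_nat muln0 muln1.
rewrite (@eq_big_nat _ _ _ 0 Nt _ (fun _ => 0)); last first.
  by move=> i /andP[_ H]; rewrite leqNgt (ltn_trans H jN).
by rewrite sum_nat_const_nat muln0; apply/esym/eqP; rewrite subn_eq0 ltnW.
Qed.

Lemma hockey L n : 0 < L -> \sum_(j < n) 'C(n - j, L) = 'C(n.+1, L.+1).
Proof.
move=> L0; elim: n => [|n IH]; first by rewrite big_ord0 bin_small // ltnS.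
rewrite big_ord_recl subn0 /=.
rewrite (eq_bigr (fun j : 'I_n => 'C(n - j, L))); last by move=> j _; rewrite /bump /= add1n subSS.
by rewrite IH [in RHS]binS addnC.
Qed.

Lemma sum_mI Nt L : 0 < L ->
  \sum_(I : {set 'I_Nt} | #|I| == L) (mI I).+1 = 'C(Nt.+1, L.+1).
Proof.
move=> L0.
rewrite (eq_bigr (fun I => \sum_(j < Nt) (j <= mI I : nat))); last first.
  by move=> I /eqP IL; rewrite sum_le_ord // mI_lt // -card_gt0 IL.
rewrite exchange_big /= -hockey //; apply: eq_bigr => j _.
rewrite sum_bool_card -(card_ge Nt j) -cards_draws; apply: eq_card => I.
rewrite !inE andbC; congr (_ && _); apply/idP/idP.
  move=> H; apply/fintype.subsetP => i iI; rewrite inE; exact: leq_trans H (mI_le iI).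
move=> /fintype.subsetP H; apply: nbigmin_ge; first exact: ltnW.
by move=> i iI; have := H i iI; rewrite inE.
Qed.

Lemma card_sets Nt L : #|[set I : {set 'I_Nt} | #|I| == L]| = 'C(Nt, L).
Proof. by rewrite card_draws card_ord. Qed.

End CombM.
Import CombM.

Module IntegM.
Set Implicit Arguments. Unset Strict Implicit. Unset Printing Implicit Defensive.
Local Open Scope ring_scope.
Local Open Scope ereal_scope.

Section Integ.
Variable R : realType.

Lemma le_int_nm d (T : measurableType d) (mu : {measure set T -> \bar R})
  (f1 f2 : T -> \bar R) :
  (forall x, 0 <= f1 x) -> (forall x, f1 x <= f2 x) ->
  \int[mu]_x f1 x <= \int[mu]_x f2 x.
Proof.
move=> f10 f12.
have f20 x : 0 <= f2 x by exact: le_trans (f10 x) (f12 x).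
rewrite (ge0_integralTE mu f10) (ge0_integralTE mu f20) /=.
apply: ereal_sup_le => _ [h hf1 <-]; exists h => //= x.
exact: le_trans (hf1 x) (f12 x).
Qed.

Lemma cgauss_ge0 s (F : R * R -> \bar R) :
  (forall z, 0 <= F z) -> 0 <= cgauss_int s F.
Proof.
move=> F0; apply: integral_ge0 => x _; apply: integral_ge0 => y _; exact: F0.
Qed.

Lemma cgauss_le s (F1 F2 : R * R -> \bar R) :
  (forall z, 0 <= F1 z) -> (forall z, F1 z <= F2 z) ->
  cgauss_int s F1 <= cgauss_int s F2.
Proof.
move=> F10 F12; apply: le_int_nm.
  by move=> x; apply: integral_ge0 => y _; exact: F10.
by move=> x; apply: le_int_nm.
Qed.

Lemma int_cst_prob (s : R) (c : \bar R) :
  \int[normal_prob 0 s]_x c = c.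
Proof.
have := integral_cst (normal_prob 0 s) measurableT c.
move=> ->; set u := (X in c * X).
have -> : u = 1 by exact: probability_setT.
by rewrite mule1.
Qed.

Lemma cgauss_cst s (c : \bar R) : cgauss_int s (fun _ => c) = c.
Proof. by rewrite /cgauss_int; under eq_integral do rewrite int_cst_prob; rewrite int_cst_prob. Qed.

Lemma iter_ge0 s n (f : (nat -> R * R) -> \bar R) :
  (forall g, 0 <= f g) -> 0 <= iter_cgauss s n f.
Proof.
elim: n f => [|n IH] f f0 //=.
by apply: cgauss_ge0 => z; apply: IH.
Qed.

Lemma iter_le s n (f1 f2 : (nat -> R * R) -> \bar R) :
  (forall g, 0 <= f1 g) -> (forall g, f1 g <= f2 g) ->
  iter_cgauss s n f1 <= iter_cgauss s n f2.
Proof.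
elim: n f1 f2 => [|n IH] f1 f2 f10 f12 //=.
apply: cgauss_le => z; first by apply: iter_ge0.
by apply: IH.
Qed.

Lemma iter_cst s n (c : \bar R) : iter_cgauss s n (fun _ => c) = c.
Proof.
elim: n => [|n IH] //=.
by rewrite (_ : (fun z => _) = fun _ => c) ?cgauss_cst //; apply: funext => z.
Qed.

Lemma iter_dep s n m (F : R * R -> \bar R) : (m < n)%N ->
  iter_cgauss s n (fun g => F (g m)) = cgauss_int s F.
Proof.
elim: n => [|n IH] //= mn.
case: (eqVneq m n) => [Emn|mnn].
  subst m; congr cgauss_int; apply: funext => z.
  rewrite -[RHS](iter_cst s n (F z)); congr iter_cgauss.
have mn' : (m < n)%N by rewrite ltn_neqAle mnn -ltnS.
by rewrite IH // cgauss_cst.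
Qed.

End Integ.

End IntegM.
Import IntegM.

Module GaussM.
Set Implicit Arguments. Unset Strict Implicit. Unset Printing Implicit Defensive.
Local Open Scope ring_scope.
Local Open Scope ereal_scope.

Section Gauss.
Variable R : realType.
Local Notation T0 := (g_sigma_algebraType (R.-ocitv).-measurable).
Definition toT0 (x : R) : T0 := (x : ocitv_type R).
Definition itvT0 (r : R) : set T0 := ((`[(- r)%R, r]%classic : set R) : set (ocitv_type R)).

Lemma int_aff (s a k : R) (A : set T0) : measurable A -> (0 <= a)%R -> (0 <= k)%R ->
  \int[normal_prob 0 s]_y (a + k * \1_A y)%:E = a%:E + k%:E * normal_prob 0 s A.
Proof.
move=> mA a0 k0.
have i0 : forall y, (0 <= (\1_A y : R))%R by move=> y; rewrite indicE ler0n.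
have mi : measurable_fun setT (fun y : T0 => (\1_A y : R)%:E).
  exact: (proj2 (measurable_EFinP setT (\1_A : T0 -> R)) (measurable_indic (D:=setT) mA)).
have mki : measurable_fun setT (fun y : T0 => k%:E * (\1_A y : R)%:E).
  exact: measurable_funeM.
under eq_integral do rewrite EFinD EFinM.
rewrite (ge0_integralD _ measurableT (f1 := fun _ => a%:E)
   (f2 := fun y => k%:E * (\1_A y : R)%:E)).
- rewrite int_cst_prob (ge0_integralZl _ measurableT mi).
  + by rewrite integral_indic // setIT.
  + by move=> x _; rewrite lee_fin.
  + by rewrite lee_fin.
- by move=> x _; rewrite lee_fin.
- exact: measurable_cst.
- by move=> x _; rewrite -EFinM lee_fin mulr_ge0.
- exact: mki.
Qed.

Lemma prob_fin (s : R) (A : set T0) : measurable A ->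
  normal_prob 0 s A = (fine (normal_prob 0 s A))%:E.
Proof.
move=> mA; rewrite fineK // ge0_fin_numE; last exact: measure_ge0.
apply: (le_lt_trans (probability_le1 (normal_prob 0 s) mA)); exact: ltry.
Qed.

Lemma cgauss_ind (s a b : R) (A : set T0) : measurable A -> (0 <= a)%R -> (0 <= b)%R ->
  cgauss_int s (fun z => (a + b * (\1_A (toT0 z.1) * \1_A (toT0 z.2)))%:E)
  = (a + b * fine (normal_prob 0 s A) * fine (normal_prob 0 s A))%:E.
Proof.
move=> mA a0 b0; set p := fine (normal_prob 0 s A).
have p0 : (0 <= p)%R by rewrite /p fine_ge0 // measure_ge0.
rewrite /cgauss_int /toT0.
under eq_integral => x _.
  rewrite /=.
  under eq_integral do rewrite mulrA.
  rewrite int_aff //; last by rewrite mulr_ge0.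
  rewrite prob_fin // -/p -EFinM -EFinD mulrAC.
  over.
rewrite /= int_aff //; last by rewrite mulr_ge0.
by rewrite prob_fin // -/p -EFinM -EFinD.
Qed.

Lemma prob_itv_le (s r : R) : (s != 0)%R -> (0 <= r)%R ->
  (fine (normal_prob 0%R s (itvT0 r)) <= normal_peak s * (r *+ 2))%R.
Proof.
move=> s0 r0.
have mI : measurable (itvT0 r) by exact: measurable_itv.
rewrite -lee_fin -prob_fin //.
rewrite /normal_prob.
apply: (@le_trans _ _ (\int[lebesgue_measure]_(x in itvT0 r) (normal_peak s)%:E)).
  apply: ge0_le_integral => //.
  - by move=> x _; rewrite lee_fin normal_pdf_ge0.
  - by apply/measurable_EFinP; apply: measurable_funTS; exact: measurable_normal_pdf.
  - by move=> x _; rewrite lee_fin normal_pdf_ub.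
have -> := integral_cst lebesgue_measure mI (normal_peak s)%:E.
have := lebesgue_measure_itv `[(- r)%R, r]; rewrite /= => HL.
rewrite /itvT0 HL lte_fin.
case: ifP => _.
  by rewrite -EFinD -EFinM lee_fin opprK -mulr2n.
by rewrite mule0 lee_fin mulr_ge0 ?normal_peak_ge0 ?mulrn_wge0.
Qed.

End Gauss.

End GaussM.
Import GaussM.

Module MainM.
Set Implicit Arguments. Unset Strict Implicit. Unset Printing Implicit Defensive.
Local Open Scope ring_scope.

Section Main.
Variable R : realType.
Local Notation T0 := (g_sigma_algebraType (R.-ocitv).-measurable).

Lemma mI_attained Nt (I : {set 'I_Nt}) : I != finset.set0 ->
  exists2 k : 'I_Nt, k \in I & mI I = k.
Proof.
case/finset.set0Pn => i0 i0I.
case: (arg_minnP (fun i : 'I_Nt => (i : nat)) i0I) => k kI kmin.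
exists k => //; apply/eqP; rewrite eqn_leq mI_le //=.
by apply: nbigmin_ge; [exact: ltnW (ltn_ord k) | exact: kmin].
Qed.

Lemma in_support_ge Nt (I : {set 'I_Nt}) j : in_support I j -> (mI I <= j)%N.
Proof. by case/mapP => k; rewrite mem_enum => kI ->; exact: mI_le. Qed.

Lemma in_support_k Nt (I : {set 'I_Nt}) (k : 'I_Nt) : k \in I -> in_support I k.
Proof. by move=> kI; apply/mapP; exists k; rewrite ?mem_enum. Qed.

Lemma tl_ge NRF Nt (alpha : R) (I : {set 'I_Nt}) g : I != finset.set0 ->
  ((mI I).+1 <= train_len NRF alpha I g)%N.
Proof.
move=> I0; rewrite /train_len; apply: nbigmin_ge; first exact: mI_lt.
by move=> j /andP[/andP[/in_support_ge H _] _]; rewrite ltnS.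
Qed.

Lemma tl_le NRF Nt (alpha : R) (I : {set 'I_Nt}) g : (train_len NRF alpha I g <= Nt)%N.
Proof.
rewrite /train_len; apply: (big_ind (fun x => x <= Nt)%N) => //.
by move=> x y hx hy; rewrite geq_min hx.
Qed.

Lemma tl_le_m NRF Nt (alpha : R) (I : {set 'I_Nt}) g : (1 <= NRF)%N ->
  0 <= alpha / Nt%:R -> I != finset.set0 -> alpha / Nt%:R < pw g (mI I) ->
  (train_len NRF alpha I g <= (mI I).+1)%N.
Proof.
move=> N1 c0 I0 hp.
have [k kI km] := mI_attained I0.
have hz : hnz I g (mI I).
  rewrite /hnz km in_support_k //= -km; apply/eqP => e.
  by move: hp; rewrite /pw e /= !expr2 !mul0r addr0 ltNge c0.
have hB : Bset I g (mI I) = [:: mI I].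
  rewrite /Bset -addn1 iotaD filter_cat add0n /= hz.
  rewrite (@eq_in_filter _ _ pred0) ?filter_pred0 //.
  move=> l; rewrite mem_iota add0n /= => lm; apply/negbTE; apply/negP.
  by move=> /andP[/in_support_ge H _]; move: lm; rewrite ltnNge H.
have st : stops NRF alpha I g (mI I).
  rewrite /stops hz /topsum hB /= (minn_idPr N1) /=.
  by rewrite big_seq1.
have := nbigmin_le (P := fun j : 'I_Nt => stops NRF alpha I g j) Nt
   (fun j : 'I_Nt => (j : nat).+1) (x := k).
by rewrite km => H; apply: H; rewrite -km.
Qed.

Lemma tl_upper NRF Nt (alpha : R) (I : {set 'I_Nt}) g : (1 <= NRF)%N ->
  (0 < Nt)%N -> 0 < alpha -> I != finset.set0 ->
  ((train_len NRF alpha I g)%:R <= (mI I).+1%:R + Nt%:R *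
     (\1_(itvT0 (Num.sqrt (alpha / Nt%:R))) (toT0 (g (mI I)).1) *
      \1_(itvT0 (Num.sqrt (alpha / Nt%:R))) (toT0 (g (mI I)).2)) :> R).
Proof.
move=> N1 Nt0 a0 I0; set c := alpha / Nt%:R.
have c0 : 0 <= c by rewrite divr_ge0 // ltW.
have ind0 : forall x : T0, 0 <= (\1_(itvT0 (Num.sqrt c)) x : R).
  by move=> x; rewrite indicE ler0n.
case: (ltrP c (pw g (mI I))) => hc.
  apply: (@le_trans _ _ (mI I).+1%:R).
    by rewrite ler_nat; exact: tl_le_m.
  by rewrite lerDl mulr_ge0 ?mulr_ge0.
have in1 : forall x : R, x ^+ 2 <= c -> \1_(itvT0 (Num.sqrt c)) (toT0 x) = 1 :> R.
  move=> x hx; rewrite indicE /itvT0 /toT0 mem_set //=.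
  by rewrite in_itv /= -ler_norml -sqrtr_sqr ler_sqrt.
rewrite !in1 ?mulr1.
- apply: (@le_trans _ _ Nt%:R); first by rewrite ler_nat; exact: tl_le.
  by rewrite lerDr ler0n.
- by apply: le_trans hc; rewrite /pw lerDr sqr_ge0.
- by apply: le_trans hc; rewrite /pw lerDl sqr_ge0.
Qed.

Lemma kc_eq (Nt : nat) (P r : R) :
  Nt%:R * (P * (r *+ 2) * (P * (r *+ 2))) = 4 * (Nt%:R * r ^+ 2) * P ^+ 2.
Proof. ring. Qed.

Definition Kc (L : nat) (alpha : R) : R := 4 * alpha * normal_peak (sdL R L) ^+ 2.

Lemma sdL_neq0 L : (1 <= L)%N -> sdL R L != 0.
Proof.
move=> L1; rewrite /sdL gt_eqF // sqrtr_gt0 invr_gt0 pmulrn_lgt0 //.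
by rewrite ltr0n.
Qed.

Lemma iter_bounds L NRF Nt (alpha : R) (I : {set 'I_Nt}) : (1 <= L)%N -> (1 <= NRF)%N ->
  (0 < Nt)%N -> 0 < alpha -> I != finset.set0 ->
  (((mI I).+1%:R)%:E <= iter_cgauss (sdL R L) Nt (fun g => ((train_len NRF alpha I g)%:R)%:E))%E /\
  (iter_cgauss (sdL R L) Nt (fun g => ((train_len NRF alpha I g)%:R)%:E) <= ((mI I).+1%:R + Kc L alpha)%:E)%E.
Proof.
move=> L1 N1 Nt0 a0 I0; split.
  rewrite -[X in (X <= _)%E](iter_cst (sdL R L) Nt); apply: iter_le => g.
    by rewrite lee_fin ler0n.
  by rewrite lee_fin ler_nat; exact: tl_ge.
set r := Num.sqrt (alpha / Nt%:R).
set A := itvT0 r.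
pose F := fun z : R * R => (((mI I).+1%:R + Nt%:R * (\1_A (toT0 z.1) * \1_A (toT0 z.2)) : R))%:E.
apply: (@le_trans _ _ (iter_cgauss (sdL R L) Nt (fun g => F (g (mI I))))).
  apply: iter_le => g; first by rewrite lee_fin ler0n.
  by rewrite lee_fin; exact: tl_upper.
have mA : measurable A by exact: measurable_itv.
rewrite iter_dep; last exact: mI_lt.
rewrite /F cgauss_ind //.
set p := fine _.
have p0 : 0 <= p by rewrite /p fine_ge0 // measure_ge0.
have r0 : 0 <= r by exact: sqrtr_ge0.
have pq : p <= normal_peak (sdL R L) * (r *+ 2) by exact: prob_itv_le (sdL_neq0 L1) r0.
rewrite lee_fin lerD2l.
apply: (@le_trans _ _ (Nt%:R * ((normal_peak (sdL R L) * (r *+ 2)) * (normal_peak (sdL R L) * (r *+ 2))))).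
  by rewrite -mulrA ler_wpM2l ?ler0n // ler_pM.
have c0 : 0 <= alpha / Nt%:R by rewrite divr_ge0 // ltW.
have r2 : r ^+ 2 = alpha / Nt%:R by exact: sqr_sqrtr.
have Nt0' : Nt%:R != 0 :> R by rewrite pnatr_eq0 -lt0n.
have ha : Nt%:R * r ^+ 2 = alpha by rewrite r2 mulrC divfK.
by rewrite kc_eq ha /Kc.
Qed.

End Main.


End MainM.
Import MainM.

Local Open Scope ring_scope.

Theorem lemma1 (R : realType) (L NRF : nat) (alpha : R) :
  (1 <= L)%N -> 0 < alpha -> (NRF = 1%N \/ NRF = L) ->
  exists C : R, exists N0 : nat, forall Nt : nat,
    (N0 <= Nt)%N -> (L <= Nt)%N ->
    (`| avg_train_len L NRF Nt alpha - (Nt%:R / L.+1%:R)%:E | <= C%:E)%E.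
Proof.
move=> L1 a0 hN.
have N1 : (1 <= NRF)%N by case: hN => ->.
exists (1 + Kc L alpha), 0%N => Nt _ LNt.
have Nt0 : (0 < Nt)%N by exact: leq_trans L1 LNt.
rewrite /avg_train_len.
set cnt := #|[set I : {set 'I_Nt} | #|I| == L]|.
have cntE : cnt = 'C(Nt, L) := card_sets Nt L.
have cnt0 : (0 < cnt)%N by rewrite cntE bin_gt0.
have ne : forall I : {set 'I_Nt}, #|I| == L -> I != finset.set0.
  by move=> I /eqP IL; rewrite -card_gt0 IL.
pose t (I : {set 'I_Nt}) := fine (iter_cgauss (sdL R L) Nt (fun g => ((train_len NRF alpha I g)%:R)%:E)).
have tE : forall I : {set 'I_Nt}, #|I| == L ->
    iter_cgauss (sdL R L) Nt (fun g => ((train_len NRF alpha I g)%:R)%:E) = (t I)%:E.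
  move=> I IL; have [lb ub] := iter_bounds (NRF:=NRF) (alpha:=alpha) L1 N1 Nt0 a0 (ne I IL).
  rewrite /t fineK // ge0_fin_numE; first exact: le_lt_trans ub (ltry _).
  by apply: le_trans lb; rewrite lee_fin ler0n.
have tlo : forall I : {set 'I_Nt}, #|I| == L -> (mI I).+1%:R <= t I.
  move=> I IL; have [lb _] := iter_bounds (NRF:=NRF) (alpha:=alpha) L1 N1 Nt0 a0 (ne I IL).
  by move: lb; rewrite tE // lee_fin.
have thi : forall I : {set 'I_Nt}, #|I| == L -> t I <= (mI I).+1%:R + Kc L alpha.
  move=> I IL; have [_ ub] := iter_bounds (NRF:=NRF) (alpha:=alpha) L1 N1 Nt0 a0 (ne I IL).
  by move: ub; rewrite tE // lee_fin.
rewrite (eq_bigr (fun I => (t I)%:E)); last by move=> I /tE.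
rewrite sumEFin -EFinM -EFinB lee_fin.
set S := \sum_(i : {set 'I_Nt} | #|i| == L) t i.
have cntS : \sum_(I : {set 'I_Nt} | #|I| == L) 1%N = cnt.
  by rewrite /cnt -sum1_card; apply: eq_bigl => I; rewrite inE.
have Slo : 'C(Nt.+1, L.+1)%:R <= S.
  by rewrite -sum_mI // natr_sum; apply: ler_sum => I; exact: tlo.
have Shi : S <= 'C(Nt.+1, L.+1)%:R + cnt%:R * Kc L alpha.
  apply: le_trans (ler_sum _ thi) _.
  rewrite big_split /= -sum_mI // natr_sum lerD2l.
  rewrite -cntS natr_sum mulr_suml; apply: ler_sum => I _; by rewrite mul1r.
have K0 : 0 <= Kc L alpha by rewrite /Kc mulr_ge0 ?sqr_ge0 // mulr_ge0 // ltW.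
have cntR : 0 < cnt%:R :> R by rewrite ltr0n.
have key : (L.+1 * 'C(Nt.+1, L.+1) = Nt.+1 * cnt)%N by rewrite cntE -mul_bin_diag.
have h3 : 'C(Nt.+1, L.+1)%:R / cnt%:R = Nt%:R / L.+1%:R + 1 / L.+1%:R :> R.
  have hL : L.+1%:R != 0 :> R by rewrite pnatr_eq0.
  have hc : cnt%:R != 0 :> R by rewrite pnatr_eq0 -lt0n.
  rewrite -mulrDl natr1; apply/eqP; rewrite (eqr_div _ _ hc hL) -!natrM eqr_nat.
  by rewrite mulnC key.
have h1 : 'C(Nt.+1, L.+1)%:R / cnt%:R <= S / cnt%:R.
  by rewrite ler_pM2r ?invr_gt0.
have h2 : S / cnt%:R <= 'C(Nt.+1, L.+1)%:R / cnt%:R + Kc L alpha.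
  apply: le_trans (_ : ('C(Nt.+1, L.+1)%:R + cnt%:R * Kc L alpha) / cnt%:R <= _).
    by rewrite ler_pM2r ?invr_gt0.
  by rewrite mulrDl mulrAC divff ?gt_eqF // mul1r.
have h4 : 0 <= 1 / L.+1%:R :> R by rewrite div1r invr_ge0 ler0n.
have h5 : 1 / L.+1%:R <= 1 :> R.
  by rewrite ler_pdivrMr ?ltr0n // mul1r ler1n.
move: h1 h2 h3 h4 h5.
move: (S / cnt%:R) ('C(Nt.+1, L.+1)%:R / cnt%:R) (Nt%:R / L.+1%:R) (1 / L.+1%:R : R) => x y z w h1 h2 h3 h4 h5.
rewrite ger0_norm; lra.
Qed.
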